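(* Let $\phi_1,\ldots,\phi_n \vdash \psi_0$ be a sequent of $NOM$ ($n\ge 0$). The following are equivalent: (1) $\phi_1,\ldots,\phi_n\vdash\psi_0$ is derivable in $NOM$ extended by the exchange rule (from $\Gamma,\phi,\psi,\Delta\vdash\chi$ infer $\Gamma,\psi,\phi,\Delta\vdash\chi$, for arbitrary finite sequences $\Gamma,\Delta$ and formulas $\phi,\psi,\chi$); (2) $\phi_1,\ldots,\phi_n\vdash\psi_0$ is derivable in Gentzen's classical sequent calculus $LK$ (the system $G1$ of Kleene's Introduction to Metamathematics); (3) the formula $(\phi_1\wedge\cdots\wedge\phi_n)\rightarrow\psi_0$ is derivable in Kleene's Hilbert-style system $H$ for classical logic, i.e. is a classical tautology. When $n=0$, $(\phi_1\wedge\cdots\wedge\phi_n)\rightarrow\psi_0$ means $\psi_0$.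
   Context: The propositional deductive system $NOM$: formulas are built from propositional letters using the binary connectives $\wedge$, $\rightarrow$ and the unary connective $\neg$. A sequent is an expression $\phi_1,\ldots,\phi_n \vdash \psi$ with $n\ge 0$, whose antecedent is a finite sequence (order matters, repetitions allowed) of formulas. Below $\Gamma$ denotes a finite, possibly empty, sequence of formulas, $\phi,\psi,\chi$ formulas, and commas denote concatenation. A sequent is derivable in $NOM$ if it can be obtained with the following rules (premises $\Rightarrow$ conclusion): (assumption) $\Gamma,\phi\vdash\phi$, no premises; (cut) $\Gamma\vdash\phi$ and $\Gamma,\phi\vdash\psi$ $\Rightarrow$ $\Gamma\vdash\psi$; (paste) $\Gamma\vdash\phi$ and $\Gamma\vdash\psi$ $\Rightarrow$ $\Gamma,\phi\vdash\psi$; (compatible exchange) $\Gamma,\phi,\psi\vdash\phi$ and $\Gamma,\phi,\psi\vdash\chi$ and $\Gamma,\psi,\phi\vdash\psi$ $\Rightarrow$ $\Gamma,\psi,\phi\vdash\chi$; ($\wedge$-introduction) $\Gamma\vdash\phi$ and $\Gamma\vdash\psi$ $\Rightarrow$ $\Gamma\vdash\phi\wedge\psi$; ($\wedge$-elimination) $\Gamma\vdash\phi\wedge\psi$ $\Rightarrow$ $\Gamma\vdash\phi$, and $\Gamma\vdash\phi\wedge\psi$ $\Rightarrow$ $\Gamma\vdash\psi$; ($\rightarrow$-introduction) $\Gamma,\phi\vdash\psi$ $\Rightarrow$ $\Gamma\vdash\phi\rightarrow\psi$; ($\rightarrow$-elimination) $\Gamma\vdash\phi\rightarrow\psi$ $\Rightarrow$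 $\Gamma,\phi\vdash\psi$; (excluded middle) $\Gamma,\phi\vdash\psi$ and $\Gamma,\neg\phi\vdash\psi$ $\Rightarrow$ $\Gamma\vdash\psi$; (deductive explosion) $\Gamma\vdash\neg\phi$ $\Rightarrow$ $\Gamma,\phi\vdash\psi$. *)

(* Defs.v *)
From Stdlib Require Import List.
Import ListNotations.

Inductive form : Type :=
| Var  : nat -> form
| And  : form -> form -> form
| Imp  : form -> form -> form
| Neg  : form -> form.

Inductive NOMx (exch : bool) : list form -> form -> Prop :=
| nom_assum : forall G p, NOMx exch (G ++ [p]) p
| nom_cut : forall G p q,
    NOMx exch G p -> NOMx exch (G ++ [p]) q -> NOMx exch G q
| nom_paste : forall G p q,
    NOMx exch G p -> NOMx exch G q -> NOMx exch (G ++ [p]) q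
| nom_cexch : forall G p q c,
    NOMx exch (G ++ [p; q]) p ->
    NOMx exch (G ++ [p; q]) c ->
    NOMx exch (G ++ [q; p]) q ->
    NOMx exch (G ++ [q; p]) c
| nom_andI : forall G p q,
    NOMx exch G p -> NOMx exch G q -> NOMx exch G (And p q)
| nom_andE1 : forall G p q, NOMx exch G (And p q) -> NOMx exch G p
| nom_andE2 : forall G p q, NOMx exch G (And p q) -> NOMx exch G q
| nom_impI : forall G p q, NOMx exch (G ++ [p]) q -> NOMx exch G (Imp p q)
| nom_impE : forall G p q, NOMx exch G (Imp p q) -> NOMx exch (G ++ [p]) q
| nom_em : forall G p q,
    NOMx exch (G ++ [p]) q -> NOMx exch (G ++ [Neg p]) q -> NOMx exch G q
| nom_explo : forall G p q, NOMx exch G (Neg p) -> NOMx exch (G ++ [p]) q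
| nom_exch : exch = true -> forall G D p q c,
    NOMx exch (G ++ p :: q :: D) c -> NOMx exch (G ++ q :: p :: D) c.

Definition NOM := NOMx false.
Definition NOM_exch := NOMx true.

(* Gentzen's LK in the form of Kleene's G1 (Introduction to Metamathematics,
   Sec. 77), propositional rules for the connectives /\, ->, ~ only.
   [G1 Gamma Theta] : the sequent Gamma -> Theta is derivable. *)
Inductive G1 : list form -> list form -> Prop :=
| g1_ax : forall C, G1 [C] [C]
| g1_thinL : forall D G T, G1 G T -> G1 (D :: G) T
| g1_thinR : forall D G T, G1 G T -> G1 G (T ++ [D])
| g1_contrL : forall D G T, G1 (D :: D :: G) T -> G1 (D :: G) T
| g1_contrR : forall D G T, G1 G (T ++ [D; D]) -> G1 G (T ++ [D])
| g1_interL : forall Dl C D G T,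
    G1 (Dl ++ D :: C :: G) T -> G1 (Dl ++ C :: D :: G) T
| g1_interR : forall G T C D L,
    G1 G (T ++ C :: D :: L) -> G1 G (T ++ D :: C :: L)
| g1_cut : forall Dl L C G T,
    G1 Dl (L ++ [C]) -> G1 (C :: G) T -> G1 (Dl ++ G) (L ++ T)
| g1_impR : forall A B G T, G1 (A :: G) (T ++ [B]) -> G1 G (T ++ [Imp A B])
| g1_impL : forall A B Dl L G T,
    G1 Dl (L ++ [A]) -> G1 (B :: G) T -> G1 (Imp A B :: Dl ++ G) (L ++ T)
| g1_andR : forall A B G T,
    G1 G (T ++ [A]) -> G1 G (T ++ [B]) -> G1 G (T ++ [And A B])
| g1_andL1 : forall A B G T, G1 (A :: G) T -> G1 (And A B :: G) T
| g1_andL2 : forall A B G T, G1 (B :: G) T -> G1 (And A B :: G) T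
| g1_negR : forall A G T, G1 (A :: G) T -> G1 G (T ++ [Neg A])
| g1_negL : forall A G T, G1 G (T ++ [A]) -> G1 (Neg A :: G) T.

(* Kleene's Hilbert-style system H (IM Sec. 19), propositional postulates
   for /\, ->, ~ (axiom schemata 1a, 1b, 3, 4a, 4b, 7, 8 and modus ponens). *)
Inductive H : form -> Prop :=
| h1a : forall A B, H (Imp A (Imp B A))
| h1b : forall A B C,
    H (Imp (Imp A B) (Imp (Imp A (Imp B C)) (Imp A C)))
| hmp : forall A B, H A -> H (Imp A B) -> H B
| h3 : forall A B, H (Imp A (Imp B (And A B)))
| h4a : forall A B, H (Imp (And A B) A)
| h4b : forall A B, H (Imp (And A B) B)
| h7 : forall A B, H (Imp (Imp A B) (Imp (Imp A (Neg B)) (Neg A)))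
| h8 : forall A, H (Imp (Neg (Neg A)) A).

Fixpoint bigAnd (l : list form) : option form :=
  match l with
  | [] => None
  | [p] => Some p
  | p :: l' => match bigAnd l' with
               | None => Some p
               | Some q => Some (And p q)
               end
  end.

Definition seq_formula (l : list form) (psi : form) : form :=
  match bigAnd l with
  | None => psi
  | Some c => Imp c psi
  end.

(* Main.v *)
Require Import Defs.
From Stdlib Require Import List Permutation.
Import ListNotations.

Lemma mono_gen (S : list form -> Prop)
 (Hp : forall l l', Permutation l l' -> S l -> S l')
 (Hw : forall a l, S l -> S (a::l))
 (Hc : forall a l, S (a::a::l) -> S (a::l)) :
 forall l l', incl l l' -> S l -> S l'.
Proof.
 assert (W : forall l l', S l -> S (l' ++ l)) by (intros l l' HH; induction l'; simpl; auto).
 assert (P : forall l l', incl l l' -> S (l ++ l') -> S l').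
 { induction l as [|a l IH]; intros l' Hi HS; simpl in *; auto.
   assert (Ha : In a l') by (apply Hi; left; auto).
   apply in_split in Ha as (l1 & l2 & ->).
   apply IH. { intros x Hx; apply Hi; right; auto. }
   apply (Hp (a :: l ++ l1 ++ l2)).
   { rewrite !app_assoc. apply Permutation_middle. }
   apply Hc. apply (Hp (a :: l ++ l1 ++ a :: l2)); auto.
   apply perm_skip; rewrite !app_assoc; apply Permutation_sym, Permutation_middle. }
 intros l l' Hi HS. apply (P l); auto. apply (Hp (l' ++ l)); [apply Permutation_app_comm | apply W; auto].
Qed.

Ltac inc := try (let x := fresh in intros x); simpl; rewrite ?map_app, ?in_app_iff; simpl; rewrite ?map_app, ?in_app_iff; simpl; tauto.

Inductive Hc (D : list form) : form -> Prop :=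
| hc_hyp : forall A, In A D -> Hc D A
| hc_ax : forall A, H A -> Hc D A
| hc_mp : forall A B, Hc D A -> Hc D (Imp A B) -> Hc D B.

Lemma hc_mono D D' A : incl D D' -> Hc D A -> Hc D' A.
Proof. intros Hi HH; induction HH; [apply hc_hyp; apply Hi; auto|apply hc_ax; auto|eapply hc_mp; [exact IHHH1|exact IHHH2]]. Qed.

Lemma H_id A : H (Imp A A).
Proof. eapply hmp; [apply (h1a A (Imp A A))|]. eapply hmp; [apply (h1a A A)|apply h1b]. Qed.

Lemma hc_DT D A B : Hc (A :: D) B -> Hc D (Imp A B).
Proof.
 intros HH; remember (A :: D) as D0; induction HH as [B Hin|B Hax|B C H1 IH1 H2 IH2]; subst.
 - destruct Hin as [<-|Hin]. apply hc_ax, H_id.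
   eapply hc_mp; [apply hc_hyp; eauto| apply hc_ax, h1a].
 - eapply hc_mp; [apply hc_ax; eauto| apply hc_ax, h1a].
 - eapply hc_mp; [apply IH2; auto|]. eapply hc_mp; [apply IH1; auto|apply hc_ax, h1b].
Qed.

Lemma hc_cut1 D A B : Hc D A -> Hc (A :: D) B -> Hc D B.
Proof. intros H1 H2; eapply hc_mp; [exact H1| apply hc_DT; auto]. Qed.

Lemma hc_raa D q : Hc (Neg q :: D) q -> Hc D q.
Proof.
 intros HH. apply hc_DT in HH.
 eapply hc_mp; [|apply hc_ax, h8].
 eapply hc_mp; [apply hc_ax, H_id|].
 eapply hc_mp; [exact HH|apply hc_ax, h7].
Qed.

Lemma hc_contra D a b : Hc D a -> Hc D (Neg a) -> Hc D b.
Proof.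
 intros H1 H2.
 eapply hc_mp; [|apply hc_ax, h8].
 eapply hc_mp; [eapply hc_mp; [exact H2|apply hc_ax, h1a]|].
 eapply hc_mp; [eapply hc_mp; [exact H1|apply hc_ax, h1a]|apply hc_ax, h7].
Qed.

Lemma hc_em D p q : Hc (p :: D) q -> Hc (Neg p :: D) q -> Hc D q.
Proof.
 intros H1 H2. apply hc_raa.
 assert (Hnp : Hc (Neg q :: D) (Neg p)).
 { eapply hc_mp; [|eapply hc_mp; [|apply hc_ax, h7]].
   - eapply hc_mp; [apply hc_hyp; left; reflexivity|apply hc_ax, h1a].
   - apply (hc_mono D); [inc|]. apply hc_DT; auto. }
 eapply hc_cut1; [exact Hnp|]. (eapply hc_mono; [|exact H2]; inc).
Qed.

Lemma nom_hc G c : NOM_exch G c -> Hc G c.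
Proof.
 unfold NOM_exch; intros HH; induction HH.
 - apply hc_hyp; inc.
 - eapply hc_cut1; [exact IHHH1|]. (eapply hc_mono; [|exact IHHH2]; inc).
 - (eapply hc_mono; [|exact IHHH2]; inc).
 - (eapply hc_mono; [|exact IHHH2]; inc).
 - eapply hc_mp; [exact IHHH2|]. eapply hc_mp; [exact IHHH1|apply hc_ax, h3].
 - eapply hc_mp; [exact IHHH|apply hc_ax, h4a].
 - eapply hc_mp; [exact IHHH|apply hc_ax, h4b].
 - apply hc_DT. (eapply hc_mono; [|exact IHHH]; inc).
 - eapply hc_mp; [apply hc_hyp; inc|]. (eapply hc_mono; [|exact IHHH]; inc).
 - apply (hc_em _ p); [eapply hc_mono; [|exact IHHH1]|eapply hc_mono; [|exact IHHH2]]; inc.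
 - eapply hc_contra; [apply hc_hyp; inc|]. (eapply hc_mono; [|exact IHHH]; inc).
 - (eapply hc_mono; [|exact IHHH]; inc).
Qed.

Lemma bigAnd_cons_some a l : exists c, bigAnd (a :: l) = Some c.
Proof. destruct l as [|b l]; [simpl; eauto|].
 change (bigAnd (a :: b :: l)) with (match bigAnd (b :: l) with None => Some a | Some q => Some (And a q) end).
 destruct (bigAnd (b :: l)); eauto. Qed.

Lemma bigAnd_none l : bigAnd l = None -> l = [].
Proof. destruct l; auto. destruct (bigAnd_cons_some f l) as [c Hc']; congruence. Qed.

Lemma hc_subst G D p : (forall x, In x G -> Hc D x) -> Hc G p -> Hc D p.
Proof. intros Hx HH; induction HH as [q Hq|q Hq|q r H1 IH1 H2 IH2]; [apply Hx; auto|apply hc_ax; auto|eapply hc_mp; [exact IH1|exact IH2]]. Qed.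

Lemma bigAnd_elim l : forall c, bigAnd l = Some c -> forall x, In x l -> Hc [c] x.
Proof.
 induction l as [|a l IH]; intros c Hb x Hx; [destruct Hx|].
 destruct l as [|b l'].
 - simpl in Hb. injection Hb as <-. destruct Hx as [<-|[]]. apply hc_hyp; left; auto.
 - destruct (bigAnd_cons_some b l') as [q Hq].
   change (bigAnd (a :: b :: l')) with (match bigAnd (b :: l') with None => Some a | Some q => Some (And a q) end) in Hb.
   rewrite Hq in Hb. injection Hb as <-.
   destruct Hx as [<-|Hx].
   + eapply hc_mp; [apply hc_hyp; left; reflexivity|apply hc_ax, h4a].
   + apply (hc_subst [q]); [|apply (IH q Hq x Hx)].
     intros y [<-|[]]. eapply hc_mp; [apply hc_hyp; left; reflexivity|apply hc_ax, h4b].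
Qed.

Lemma bigAnd_intro l : forall c, bigAnd l = Some c -> Hc l c.
Proof.
 induction l as [|a l IH]; intros c Hb; [discriminate|].
 destruct l as [|b l'].
 - simpl in Hb. injection Hb as <-. apply hc_hyp; left; auto.
 - destruct (bigAnd_cons_some b l') as [q Hq].
   change (bigAnd (a :: b :: l')) with (match bigAnd (b :: l') with None => Some a | Some q => Some (And a q) end) in Hb.
   rewrite Hq in Hb. injection Hb as <-.
   eapply hc_mp; [(eapply hc_mono; [|exact (IH q Hq)]; inc)|].
   eapply hc_mp; [apply hc_hyp; left; reflexivity|apply hc_ax, h3].
Qed.

Lemma hc_nil p : Hc [] p <-> H p.
Proof.
 split; [|apply hc_ax]. intros HH; induction HH as [q Hq|q Hq|q r H1 IH1 H2 IH2]; [destruct Hq|auto|eapply hmp; [exact IH1|exact IH2]].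
Qed.

Lemma hc_seq G p : Hc G p <-> H (seq_formula G p).
Proof.
 unfold seq_formula. destruct (bigAnd G) as [c|] eqn:E.
 - split; intros HH.
   + apply hc_nil, hc_DT. apply (hc_subst G); auto. apply bigAnd_elim; auto.
   + eapply hc_mp; [apply bigAnd_intro; eauto|apply hc_ax; auto].
 - apply bigAnd_none in E; subst. apply hc_nil.
Qed.

Definition N := NOMx true.

Lemma n_weak_end G c p : N G c -> N (G ++ [p]) c.
Proof.
 intros HH.
 assert (H1 : N (G ++ [p; c]) c).
 { replace (G ++ [p; c]) with ((G ++ [p]) ++ [c]) by (rewrite <- app_assoc; reflexivity). apply nom_assum. }
 apply (nom_exch true eq_refl G [] p c c) in H1.
 assert (H2 : N (G ++ [c]) (Imp p c)).
 { apply nom_impI. replace ((G ++ [c]) ++ [p]) with (G ++ [c; p]) by (rewrite <- app_assoc; reflexivity). exact H1. }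
 apply nom_impE. eapply nom_cut; [exact HH|exact H2].
Qed.

Lemma n_perm_gen l l' : Permutation l l' -> forall G c, N (G ++ l) c -> N (G ++ l') c.
Proof.
 induction 1 as [|x l l' Hp IH|x y l|l l' l'' H1 IH1 H2 IH2]; intros G c HH; auto.
 - replace (G ++ x :: l') with ((G ++ [x]) ++ l') by (rewrite <- app_assoc; reflexivity).
   apply IH. rewrite <- app_assoc. exact HH.
 - apply (nom_exch true eq_refl). exact HH.
Qed.

Lemma n_perm l l' c : Permutation l l' -> N l c -> N l' c.
Proof. intros Hp HH. apply (n_perm_gen l l' Hp [] c HH). Qed.

Lemma n_mono l l' c : incl l l' -> N l c -> N l' c.
Proof.
 intros Hi HH. apply (mono_gen (fun l => N l c)) with l; auto.
 - intros; eapply n_perm; eauto.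
 - intros a l0 H0. apply (n_perm (l0 ++ [a])); [apply Permutation_sym, Permutation_cons_append|].
   apply n_weak_end; auto.
 - intros a l0 H0. apply (n_perm (l0 ++ [a])); [apply Permutation_sym, Permutation_cons_append|].
   apply (nom_cut _ _ a); [apply nom_assum|].
   apply (n_perm (a :: a :: l0)); auto.
   rewrite <- app_assoc. simpl. apply (Permutation_cons_app _ _ _ (Permutation_cons_append l0 a)).
Qed.

Lemma n_hyp l a : In a l -> N l a.
Proof. intros Hi. apply (n_mono [a]); [intros x [<-|[]]; auto|]. apply (nom_assum true [] a). Qed.

Lemma n_cut1 D C b : N D C -> N (C :: D) b -> N D b.
Proof. intros H1 H2. eapply nom_cut; [exact H1|]. eapply n_mono; [|exact H2]; inc. Qed.

Lemma n_contra D a b : N D a -> N D (Neg a) -> N D b.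
Proof. intros H1 H2. eapply nom_cut; [exact H1|]. apply nom_explo; auto. Qed.

Lemma n_raa D C : (forall x, N (Neg C :: D) x) -> N D C.
Proof. intros HH. apply (nom_em _ _ C); [apply nom_assum|]. eapply n_mono; [|apply HH]; inc. Qed.

Lemma n_impI D A B : N (A :: D) B -> N D (Imp A B).
Proof. intros HH; apply nom_impI; eapply n_mono; [|exact HH]; inc. Qed.

Lemma n_mp D A B : N D (Imp A B) -> N D A -> N D B.
Proof. intros H1 H2. eapply nom_cut; [exact H2|]. apply nom_impE; auto. Qed.

Lemma n_dne D A : In (Neg (Neg A)) D -> N D A.
Proof.
 intros Hi. apply n_raa. intros x. eapply n_contra; [apply n_hyp; left; reflexivity|].
 apply n_hyp; right; auto.
Qed.

Definition Inc D := forall x, N D x.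

Lemma inc_mono D D' : incl D D' -> Inc D -> Inc D'.
Proof. intros Hi HH x. eapply n_mono; [exact Hi|apply HH]. Qed.

Lemma g1_nom G T : G1 G T -> Inc (G ++ map Neg T).
Proof.
 induction 1; unfold Inc in *; intros x.
 - apply (n_contra _ C); apply n_hyp; simpl; auto.
 - eapply n_mono; [|apply IHG1]; inc.
 - eapply n_mono; [|apply IHG1]; inc.
 - eapply n_mono; [|apply IHG1]; inc.
 - eapply n_mono; [|apply IHG1]; inc.
 - eapply n_mono; [|apply IHG1]; inc.
 - eapply n_mono; [|apply IHG1]; inc.
 -
   apply (n_cut1 _ C); [apply n_raa; intros y; eapply n_mono; [|apply IHG1_1]; inc|].
   eapply n_mono; [|apply IHG1_2]; inc.
 -
   assert (HB : N (A :: G ++ map Neg T) B) by (apply n_raa; intros y; eapply n_mono; [|apply IHG1]; inc).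
   apply n_impI in HB.
   eapply n_contra; [eapply n_mono; [|exact HB]; inc|apply n_hyp; inc].
 -
   assert (HA : N (Imp A B :: (Dl ++ G) ++ map Neg (L ++ T)) A)
     by (apply n_raa; intros y; eapply n_mono; [|apply IHG1_1]; inc).
   apply (n_cut1 _ B); [eapply n_mp; [apply n_hyp; left; reflexivity|exact HA]|].
   eapply n_mono; [|apply IHG1_2]; inc.
 -
   assert (HA : N (G ++ map Neg T) A) by (apply n_raa; intros y; eapply n_mono; [|apply IHG1_1]; inc).
   assert (HB : N (G ++ map Neg T) B) by (apply n_raa; intros y; eapply n_mono; [|apply IHG1_2]; inc).
   eapply n_contra; [eapply n_mono; [|apply nom_andI; [exact HA|exact HB]]; inc|apply n_hyp; inc].
 - apply (n_cut1 _ A); [apply (nom_andE1 _ _ A B); apply n_hyp; left; reflexivity|].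
   eapply n_mono; [|apply IHG1]; inc.
 - apply (n_cut1 _ B); [apply (nom_andE2 _ _ A B); apply n_hyp; left; reflexivity|].
   eapply n_mono; [|apply IHG1]; inc.
 - apply (n_cut1 _ A); [apply n_dne; inc|].
   eapply n_mono; [|apply IHG1]; inc.
 - eapply n_mono; [|apply IHG1]; inc.
Qed.

Lemma g1_to_nom G p : G1 G [p] -> N G p.
Proof. intros HH. apply n_raa. intros x. eapply n_mono; [|apply (g1_nom _ _ HH)]; inc. Qed.

Lemma g1_perm_gen l l' : Permutation l l' -> forall G T, G1 (G ++ l) T -> G1 (G ++ l') T.
Proof.
 induction 1 as [|x l l' Hp IH|x y l|l l' l'' H1 IH1 H2 IH2]; intros G T HH; auto.
 - replace (G ++ x :: l') with ((G ++ [x]) ++ l') by (rewrite <- app_assoc; reflexivity).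
   apply IH. rewrite <- app_assoc. exact HH.
 - apply g1_interL. exact HH.
Qed.

Lemma g1_mono l l' T : incl l l' -> G1 l T -> G1 l' T.
Proof.
 intros Hi HH. apply (mono_gen (fun l => G1 l T)) with l; auto.
 - intros l1 l2 Hp H0. apply (g1_perm_gen l1 l2 Hp [] T H0).
 - intros; apply g1_thinL; auto.
 - intros; apply g1_contrL; auto.
Qed.

Lemma g1_hyp l a : In a l -> G1 l [a].
Proof. intros Hi. apply (g1_mono [a]); [intros x [<-|[]]; auto|apply g1_ax]. Qed.

Lemma g1_cut1 D C T : G1 D [C] -> G1 (C :: D) T -> G1 D T.
Proof.
 intros H1 H2. apply (g1_mono (D ++ D)); [inc|]. apply (g1_cut D [] C D T); auto.
Qed.

Lemma g1_mp D A B : G1 D [Imp A B] -> G1 D [A] -> G1 D [B].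
Proof.
 intros H1 H2.
 assert (H3 : G1 [Imp A B; A] [B]) by apply (g1_impL A B [A] [] [] [B] (g1_ax A) (g1_ax B)).
 apply (g1_cut1 _ (Imp A B)); auto.
 apply (g1_cut1 _ A); [eapply g1_mono; [|exact H2]; inc|].
 eapply g1_mono; [|exact H3]; inc.
Qed.

Lemma g1_impI D A B : G1 (A :: D) [B] -> G1 D [Imp A B].
Proof. intros HH; apply (g1_impR A B D []); auto. Qed.

Lemma g1_andI D A B : G1 D [A] -> G1 D [B] -> G1 D [And A B].
Proof. intros; apply (g1_andR A B D []); auto. Qed.

Lemma g1_contra D a : G1 D [a] -> G1 D [Neg a] -> G1 D [].
Proof.
 intros H1 H2. apply (g1_cut1 _ (Neg a)); auto. apply (g1_negL a D []); auto.
Qed.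

Lemma g1_negI D A : G1 (A :: D) [] -> G1 D [Neg A].
Proof. intros HH; apply (g1_negR A D []); auto. Qed.

Lemma H_g1 A : H A -> G1 [] [A].
Proof.
 induction 1.
 - apply g1_impI, g1_impI, g1_hyp; simpl; auto.
 - apply g1_impI, g1_impI, g1_impI.
   eapply g1_mp; [eapply g1_mp; [apply g1_hyp; simpl; auto|apply g1_hyp; simpl; auto]|].
   eapply g1_mp; apply g1_hyp; simpl; auto.
 - eapply g1_mp; eauto.
 - apply g1_impI, g1_impI, g1_andI; apply g1_hyp; simpl; auto.
 - apply g1_impI, g1_andL1, g1_ax.
 - apply g1_impI, g1_andL2, g1_ax.
 - apply g1_impI, g1_impI, g1_negI.
   apply (g1_contra _ B); (eapply g1_mp; apply g1_hyp; simpl; auto).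
 - apply g1_impI. apply (g1_negL (Neg A) [] [A]). apply (g1_negR A [] [A]). apply g1_ax.
Qed.

Lemma hc_g1 G p : Hc G p -> G1 G [p].
Proof.
 intros HH; induction HH as [q Hq|q Hq|q r H1 IH1 H2 IH2].
 - apply g1_hyp; auto.
 - apply (g1_mono []); [intros x []|apply H_g1; auto].
 - eapply g1_mp; eauto.
Qed.

Theorem theorem3p2 (Gamma : list form) (psi0 : form) :
  (NOM_exch Gamma psi0 <-> G1 Gamma [psi0]) /\
  (G1 Gamma [psi0] <-> H (seq_formula Gamma psi0)).
Proof.
 split; split; intros HH.
 - apply hc_g1, nom_hc; auto.
 - apply g1_to_nom; auto.
 - apply hc_seq, nom_hc, g1_to_nom; auto.
 - apply hc_g1, hc_seq; auto.
Qed.
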